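(* Let $\Sigma$ be a finite alphabet. For every unranked ordered $\Sigma$-labeled tree $t$ with $|t|\ge 2$, $\frac12|\mathrm{bdag}(t)| \le |\mathrm{dag}(t)| \le \frac12 |\mathrm{bdag}(t)|^2$.
   Context: An unranked tree over $\Sigma$ is a finite rooted tree with nodes labeled in $\Sigma$ and linearly ordered children; $|t|$ is its number of edges. $\mathrm{dag}(t)$ is the minimal dag of $t$: its nodes are the distinct subtrees of $t$, the node of a subtree $f(s_1,\dots,s_k)$ having $k$ ordered edges to the nodes of $s_1,\dots,s_k$; $|\mathrm{dag}(t)|$ is its number of edges. The first-child/next-sibling encoding $\mathrm{fcns}(t)$ is the binary tree (optional left and right child at each node) on the nodes of $t$ in which the left child of $u$ is the first child of $u$ in $t$ and the right child of $u$ is the next sibling of $u$ in $t$ (when these exist). $\mathrm{bdag}(t)$ is the minimal dag of $\mathrm{fcns}(t)$ (identical subtrees merged), and $|\mathrm{bdag}(t)|$ its number of edges, not counting edges to absent children. *)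

(* Defs.v *)
From HB Require Import structures.
From mathcomp Require Import all_boot.
Set Implicit Arguments. Unset Strict Implicit. Unset Printing Implicit Defensive.

Section Trees.
Variable Sigma : finType.

Inductive tree := Node of Sigma & seq tree.

Definition label (t : tree) := let: Node a _ := t in a.
Definition children (t : tree) := let: Node _ ts := t in ts.

Fixpoint enc (t : tree) : GenTree.tree Sigma :=
  let: Node a ts := t in GenTree.Node 0 (GenTree.Leaf a :: map enc ts).

Fixpoint dec (g : GenTree.tree Sigma) : option tree :=
  match g with
  | GenTree.Node 0 (GenTree.Leaf a :: gs) => Some (Node a (pmap dec gs))
  | _ => None
  end.

Fixpoint encK (t : tree) : dec (enc t) = Some t :=
  match t return dec (enc t) = Some t with
  | Node a ts =>
    let fix aux (ts : seq tree) : pmap dec (map enc ts) = ts :=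
      match ts return pmap dec (map enc ts) = ts with
      | [::] => erefl
      | s :: ss => ltac:(rewrite /= encK /= aux; reflexivity)
      end in
    ltac:(rewrite /= aux; reflexivity)
  end.

HB.instance Definition _ := Countable.copy tree (pcan_type encK).

Inductive btree := BNode of Sigma & option btree & option btree.

Definition bleft (b : btree) := let: BNode _ l _ := b in l.
Definition bright (b : btree) := let: BNode _ _ r := b in r.

Fixpoint benc (b : btree) : GenTree.tree Sigma :=
  let: BNode a l r := b in
  GenTree.Node 0 [:: GenTree.Leaf a;
     (if l is Some x then GenTree.Node 2 [:: benc x] else GenTree.Node 1 [::]);
     (if r is Some x then GenTree.Node 2 [:: benc x] else GenTree.Node 1 [::])].

Fixpoint bdec (g : GenTree.tree Sigma) : option btree :=
  match g with
  | GenTree.Node 0 [:: GenTree.Leaf a; gl; gr] =>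
    let o g := match g with
               | GenTree.Node 2 [:: x] => Some (bdec x)
               | GenTree.Node 1 [::] => Some None
               | _ => None end in
    match o gl, o gr with
    | Some (Some l), Some (Some r) => Some (BNode a (Some l) (Some r))
    | Some (Some l), Some None => Some (BNode a (Some l) None)
    | Some None, Some (Some r) => Some (BNode a None (Some r))
    | Some None, Some None => Some (BNode a None None)
    | _, _ => None
    end
  | _ => None
  end.

Fixpoint bencK (b : btree) : bdec (benc b) = Some b :=
  match b return bdec (benc b) = Some b with
  | BNode a (Some l) (Some r) => ltac:(rewrite /= (bencK l) (bencK r); reflexivity)
  | BNode a (Some l) None => ltac:(rewrite /= (bencK l); reflexivity)
  | BNode a None (Some r) => ltac:(rewrite /= (bencK r); reflexivity)
  | BNode a None None => erefl
  end.

HB.instance Definition _ := Countable.copy btree (pcan_type bencK).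

Fixpoint edges (t : tree) : nat :=
  let: Node _ ts := t in sumn (map (fun s => (edges s).+1) ts).

Fixpoint subtrees (t : tree) : seq tree :=
  let: Node _ ts := t in t :: flatten (map subtrees ts).

(** |dag(t)|: the nodes of the minimal dag are the distinct subtrees of t;
    the node of f(s_1,...,s_k) has k outgoing edges. *)
Definition dag_size (t : tree) : nat :=
  sumn (map (fun s => size (children s)) (undup (subtrees t))).

(** First-child/next-sibling encoding. fcns_at t nxt is the binary node of
    the root of t, whose right child is nxt (the encoding of the next sibling
    of that node, if any) and whose left child encodes the first child of t;
    the children c_1,...,c_k are chained through right pointers. *)
Fixpoint fcns_at (t : tree) (nxt : option btree) : btree :=
  let: Node a cs := t in
  BNode a
    ((fix chain (cs : seq tree) : option btree :=
        match cs with
        | [::] => None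
        | c :: cs' => Some (fcns_at c (chain cs'))
        end) cs)
    nxt.

Definition fcns (t : tree) : btree := fcns_at t None.

Fixpoint bsubtrees (b : btree) : seq btree :=
  let: BNode _ l r := b in
  b :: (if l is Some x then bsubtrees x else [::])
    ++ (if r is Some x then bsubtrees x else [::]).

Definition bdeg (b : btree) : nat :=
  let: BNode _ l r := b in (isSome l) + (isSome r).

(** |bdag(t)|: edges of the minimal dag of fcns(t). *)
Definition bdag_size (t : tree) : nat :=
  sumn (map bdeg (undup (bsubtrees (fcns t)))).

End Trees.

(* Main.v *)
Require Import Defs.
From mathcomp Require Import all_boot.
From mathcomp Require Import zify.
Set Implicit Arguments. Unset Strict Implicit. Unset Printing Implicit Defensive.

Section S.
Variable Sigma : finType.
Notation tree := (tree Sigma).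
Notation btree := (btree Sigma).

Definition tree_ind' (P : tree -> Prop)
  (H : forall a cs, (forall c, c \in cs -> P c) -> P (Node a cs)) : forall t, P t.
Proof.
fix IH 1 => -[a cs]; apply: H.
move: cs; fix aux 1; case=> [|c0 cs'] c; first (rewrite in_nil => h; discriminate h).
rewrite in_cons; case: (c =P c0) => [->|_] /= h; first exact: IH.
exact: aux cs' c h.
Qed.

Fixpoint chain (cs : seq tree) : option btree :=
  match cs with [::] => None | c :: cs' => Some (fcns_at c (chain cs')) end.

Lemma fcns_atE a cs g : fcns_at (Node a cs) g = BNode a (chain cs) g.
Proof. by []. Qed.

Definition bs_opt (o : option btree) := if o is Some x then bsubtrees x else [::].

Lemma bsubE a cs g : bsubtrees (fcns_at (Node a cs) g) =
  fcns_at (Node a cs) g :: bs_opt (chain cs) ++ bs_opt g.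
Proof. by []. Qed.

Fixpoint cnodes (cs : seq tree) : seq btree :=
  match cs with [::] => [::] | c :: cs' => fcns_at c (chain cs') :: cnodes cs' end.

Lemma bright_fcns (c : tree) (g : option btree) : bright (fcns_at c g) = g.
Proof. by case: c. Qed.

Lemma bs_chain_cons c cs : bs_opt (chain (c :: cs)) = bsubtrees (fcns_at c (chain cs)).
Proof. by []. Qed.
Lemma cnodes_cons c cs : cnodes (c :: cs) = fcns_at c (chain cs) :: cnodes cs.
Proof. by []. Qed.

Fixpoint forest_of (b : btree) : seq tree :=
  let: BNode a l r := b in
  Node a (if l is Some x then forest_of x else [::]) :: (if r is Some y then forest_of y else [::]).
Definition oforest (o : option btree) := if o is Some y then forest_of y else [::].
Definition psi (b : btree) : tree := let: BNode a l _ := b in Node a (oforest l).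

Lemma forest_fcns s g : forest_of (fcns_at s g) = s :: oforest g.
Proof.
elim/tree_ind': s g => a cs IH g; rewrite fcns_atE /=; congr (Node _ _ :: _).
elim: cs IH => [|c cs IHcs] IH //=.
rewrite IH ?mem_head //; congr (_ :: _); apply: IHcs => x xi; apply: IH; by rewrite in_cons xi orbT.
Qed.

Lemma oforest_chain cs : oforest (chain cs) = cs.
Proof. by elim: cs => //= c cs IH; rewrite forest_fcns IH. Qed.

Lemma psi_fcns s g : psi (fcns_at s g) = s.
Proof. by case: s => a cs; rewrite fcns_atE /= oforest_chain. Qed.

Lemma chain_none cs : isSome (chain cs) = (cs != [::]).
Proof. by case: cs. Qed.

Lemma cnodes_sub cs : {subset cnodes cs <= bs_opt (chain cs)}.
Proof.
elim: cs => //= c cs IH b; rewrite in_cons => /orP[/eqP->|/IH].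
  by case: c => a l; rewrite bsubE mem_head.
by case: c => a l; rewrite bsubE in_cons mem_cat => ->; by rewrite !orbT.
Qed.

Lemma in_chain_sub c cs : c \in cs -> exists g,
  {subset bsubtrees (fcns_at c g) <= bs_opt (chain cs)}.
Proof.
elim: cs => [|c0 cs IH]; first by rewrite in_nil.
rewrite in_cons => /orP[/eqP->|H].
  by exists (chain cs) => b /= ?.
have [g Hg] := IH H.
exists g => b /Hg /=; case: c0 => a l; rewrite bsubE in_cons mem_cat => ->; by rewrite !orbT.
Qed.

Lemma subtree_in (t s : tree) (g0 : option btree) : s \in subtrees t -> exists g,
  {subset bsubtrees (fcns_at s g) <= bsubtrees (fcns_at t g0)}.
Proof.
elim/tree_ind': t g0 => a cs IH g0; change (subtrees (Node a cs)) with (Node a cs :: flatten (map (@subtrees _) cs)); rewrite in_cons => /orP[/eqP->|].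
  by exists g0.
move=> /flattenP[ss /mapP[c cin ->] sin].
have [g' Hg'] := in_chain_sub cin.
have [g Hg] := IH c cin g' sin.
by exists g => b /Hg /Hg' Hb; rewrite bsubE in_cons mem_cat Hb orbT.
Qed.

Lemma bsub_cover : forall s, forall b, b \in bs_opt (chain (children s)) ->
  exists2 s', s' \in subtrees s & b \in cnodes (children s').
Proof.
elim/tree_ind' => a cs IH b /= Hb.
suff: b \in cnodes cs \/ exists2 s', s' \in flatten (map (@subtrees _) cs) & b \in cnodes (children s').
  case=> [H|[s' H1 H2]]; first by exists (Node a cs); rewrite ?mem_head.
  by exists s'; rewrite // in_cons H1 orbT.
elim: cs IH Hb => [|c cs IHcs] IH Hb; first by rewrite /= in_nil in Hb.
move: Hb; case: c IH => a' l IH; rewrite bs_chain_cons cnodes_cons bsubE in_cons mem_cat => /orP[/eqP->|/orP[H|H]].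
- by left; rewrite mem_head.
- have [s' H1 H2] := IH (Node a' l) (mem_head _ _) b H.
  by right; exists s'; rewrite // mem_cat H1.
- have [H'|[s' H1 H2]] := IHcs (fun x xi => IH x ltac:(by rewrite in_cons xi orbT)) H.
    by left; rewrite in_cons H' orbT.
  by right; exists s'; rewrite // mem_cat H1 orbT.
Qed.


Lemma sumn_sub (T : eqType) (g : T -> nat) (u w : seq T) :
  uniq u -> {subset u <= w} -> sumn (map g u) <= sumn (map g w).
Proof.
elim: u w => [|x u IH] w //= /andP[xu uu] sub.
have xw : x \in w by apply: sub; rewrite mem_head.
rewrite (perm_sumn (perm_map g (perm_to_rem xw))) /= leq_add2l.
apply: IH => // y yu.
have : y \in x :: rem x w by rewrite -(perm_mem (perm_to_rem xw)); apply: sub; rewrite in_cons yu orbT.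
rewrite in_cons => /orP[/eqP yx|//]; by rewrite -yx yu in xu.
Qed.

Lemma bdegE (b : btree) : bdeg b = isSome (bleft b) + isSome (bright b).
Proof. by case: b. Qed.

Lemma sumn_bdeg (l : seq btree) :
  sumn (map (@bdeg _) l) = count (fun b => isSome (bleft b)) l + count (fun b => isSome (bright b)) l.
Proof. elim: l => //= b l ->; rewrite bdegE; lia. Qed.

Lemma cnodes_bdeg cs : sumn (map (@bdeg _) (cnodes cs)) + (cs != [::]) <= 2 * size cs.
Proof.
elim: cs => //= c cs IH; rewrite bdegE /= bright_fcns chain_none.
have : isSome (bleft (fcns_at c (chain cs))) <= 1 by case: (isSome _).
case: cs IH => [|c' cs'] /= IH; lia.
Qed.

Lemma suffix_node cs j : 2 <= j <= size cs -> exists b,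
  [/\ b \in cnodes cs, isSome (bright b) & size (forest_of b) = j].
Proof.
elim: cs => [|c cs IH] /=; first by lia.
move=> Hj; case: (ltngtP j (size cs).+1) => Hj'; last first.
- exists (fcns_at c (chain cs)); split; first by rewrite mem_head.
    by case: c => a l; rewrite fcns_atE /= chain_none; case: cs Hj Hj' {IH} => //=; lia.
  by rewrite forest_fcns /= oforest_chain Hj'.
- lia.
- have [|b [H1 H2 H3]] := IH; first by lia.
  by exists b; split; rewrite // in_cons H1 orbT.
Qed.

Section Main.
Variable t : tree.
Let B := bsubtrees (fcns t).
Let U := undup B.
Let DU := undup (subtrees t).
Let L := count (fun b => isSome (bleft b)) U.
Let R := count (fun b => isSome (bright b)) U.
Let p := fun s : tree => children s != [::].

Lemma bdagLR : bdag_size t = L + R.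
Proof. by rewrite /bdag_size sumn_bdeg. Qed.

Lemma R_bound s : s \in subtrees t -> size (children s) <= R.+1.
Proof.
move=> st; have [g Hg] := subtree_in None st.
set k := size (children s).
have : size (iota 2 k.-1) <= size (map (fun b => size (forest_of b)) (filter (fun b => isSome (bright b)) U)).
  apply: uniq_leq_size; first exact: iota_uniq.
  move=> j; rewrite mem_iota => Hj.
  have [|b [H1 H2 H3]] := @suffix_node (children s) j; first by rewrite -/k; lia.
  apply/mapP; exists b => //; rewrite mem_filter H2 mem_undup; apply: Hg.
  move: H1; clear; case: s => a cs H1; rewrite bsubE in_cons mem_cat (cnodes_sub H1) orbT //.
rewrite size_iota size_map size_filter -/R; lia.
Qed.

Lemma C_bound : size (filter p DU) <= L.
Proof.
rewrite /L -size_filter -(size_map psi).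
apply: uniq_leq_size; first by rewrite filter_uniq ?undup_uniq.
move=> s; rewrite mem_filter mem_undup /p => /andP[ps st].
have [g Hg] := subtree_in None st.
apply/mapP; exists (fcns_at s g); last by rewrite psi_fcns.
rewrite mem_filter mem_undup; apply/andP; split; last first.
  by apply: Hg; case: s {st ps} => a cs; rewrite bsubE mem_head.
by case: s ps {st Hg} => a cs /=; rewrite chain_none.
Qed.

Lemma dag_bound : dag_size t <= R.+1 * size (filter p DU).
Proof.
rewrite /dag_size -/DU.
have : forall s, s \in DU -> size (children s) <= R.+1 by move=> s; rewrite mem_undup; apply: R_bound.
elim: DU => //= s l IH H.
have IH' : sumn [seq size (children i) | i <- l] <= R.+1 * size (filter p l).
  by apply: IH => x xl; apply: H; rewrite in_cons xl orbT.
case ps: (p s) => /=.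
  by rewrite mulnS leq_add ?H ?mem_head.
by move: ps; rewrite /p => /negbFE/eqP ->.
Qed.

Lemma B_cover : {subset B <= fcns t :: flatten (map (fun s => cnodes (children s)) DU)}.
Proof.
move=> b; rewrite /B /fcns; case Et: t => [a cs]; rewrite bsubE in_cons mem_cat [bs_opt None]/= in_nil orbF.
case/orP=> [/eqP->|Hb]; first exact: mem_head.
rewrite in_cons; apply/orP; right.
have [s' H1 H2] := @bsub_cover (Node a cs) b Hb.
apply/flattenP; exists (cnodes (children s')) => //; apply/mapP; exists s' => //.
by rewrite /DU mem_undup Et.
Qed.

Lemma flat_bdeg (l : seq tree) :
  sumn (map (@bdeg _) (flatten (map (fun s => cnodes (children s)) l))) + count p l
  <= 2 * sumn (map (fun s => size (children s)) l).
Proof.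
elim: l => //= s l IH; rewrite map_cat sumn_cat.
have := cnodes_bdeg (children s); rewrite /p in IH *; lia.
Qed.

Lemma main : 2 <= edges t ->
  bdag_size t <= 2 * dag_size t /\ 2 * dag_size t <= bdag_size t ^ 2.
Proof.
move=> Ht.
have tst : t \in subtrees t by case: (t) => a cs; rewrite /= mem_head.
have tDU : t \in DU by rewrite mem_undup.
have cht : p t by rewrite /p; case: (t) Ht => a [].
have C1 : 0 < size (filter p DU) by rewrite size_filter -has_count; apply/hasP; exists t.
split.
  have H1 : sumn (map (@bdeg _) U) <= sumn (map (@bdeg _) (fcns t :: flatten (map (fun s => cnodes (children s)) DU))).
    apply: sumn_sub; first exact: undup_uniq.
    by move=> x xU; apply: B_cover; rewrite /U mem_undup in xU.
  have H2 := flat_bdeg DU.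
  have H3 : bdeg (fcns t) <= 1 by rewrite bdegE /fcns bright_fcns; case: (isSome _).
  move: H1; rewrite /= -/U; rewrite /bdag_size /dag_size -/B -/U -/DU.
  move: H2; rewrite size_filter in C1; lia.
have HD := dag_bound; have HC := C_bound.
have HR : 0 < R \/ 1 < size (filter p DU).
  have Rt := R_bound tst.
  case Et: t Ht tst cht => [a [|c [|c2 cs]]] //= Ht tst cht.
    right; rewrite addn0 in Ht.
    have pc : p c by rewrite /p; move: Ht; case: (c) => a' [].
    have cst : c \in subtrees t by rewrite Et /= cats0 in_cons; case: (c) => a' l; rewrite /= mem_head orbT. 
    have ct : c != t by apply/eqP => ec; move: (congr1 (@edges _) Et); rewrite -ec /=; lia.
    apply: (@uniq_leq_size _ [:: t; c]).
      by rewrite /= in_cons in_nil orbF andbT eq_sym ct.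
    move=> x; rewrite !in_cons in_nil orbF => /orP[]/eqP->; rewrite mem_filter mem_undup //.
      by rewrite Et cht tst.
    by rewrite pc cst.
  left; move: Rt; rewrite Et /=; lia.
rewrite bdagLR; move: HR HD HC C1; set C := size _; set D := dag_size t.
case=> HR HD HC C1; nia.
Qed.

End Main.

End S.

Theorem corollary1 (Sigma : finType) (t : tree Sigma) :
  2 <= edges t ->
  bdag_size t <= 2 * dag_size t /\ 2 * dag_size t <= bdag_size t ^ 2.
Proof. exact: main. Qed.
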